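(* There exists a universal constant $c>0$ such that the following holds. Let $k$ and $n$ be positive integers with $k>n$. For every $\mathbf{y}=y_1\ldots y_k\in\{0,1\}^k$, let $\rho(\mathbf{y})$ be an $n$-qubit density matrix. Suppose there exist Hermitian operators $O_1,\ldots,O_k$ on $n$ qubits, real numbers $\alpha_1,\ldots,\alpha_k$ and $\gamma>0$ such that for all $\mathbf{y}\in\{0,1\}^k$ and all $i\in\{1,\ldots,k\}$: (i) if $y_i=0$ then $\operatorname{Tr}[\rho(\mathbf{y})O_i]\le \alpha_i-\gamma$, and (ii) if $y_i=1$ then $\operatorname{Tr}[\rho(\mathbf{y})O_i]\ge \alpha_i+\gamma$. Let $\|O\|_\infty:=\max_i\|O_i\|_\infty$. Then $n\,\|O\|_\infty^2/\gamma^2\ \ge\ c\,k$, i.e. $n\|O\|_\infty^2/\gamma^2\in\Omega(k)$.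
   Context: $\|A\|_\infty$ denotes the spectral norm (largest absolute eigenvalue) of a Hermitian operator $A$. An $n$-qubit density matrix is a positive semidefinite, unit-trace operator on $(\mathbb{C}^2)^{\otimes n}$. *)

(* Defs.v *)
From HB Require Import structures.
From mathcomp Require Import all_boot all_order all_algebra.
From mathcomp Require Import complex.
From mathcomp Require Import reals.
Set Implicit Arguments. Unset Strict Implicit. Unset Printing Implicit Defensive.
Import Order.TTheory GRing.Theory Num.Theory.
Local Open Scope ring_scope.
Local Open Scope complex_scope.

Definition adjmx (R : realType) (m n : nat) (A : 'M[R[i]]_(m, n))
  : 'M[R[i]]_(n, m) := (map_mx Num.conj A)^T.

Definition is_hermitian (R : realType) (d : nat) (A : 'M[R[i]]_d) : Prop :=
  adjmx A = A.

Definition psd (R : realType) (d : nat) (A : 'M[R[i]]_d) : Prop :=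
  is_hermitian A /\ forall v : 'cV[R[i]]_d, 0 <= (adjmx v *m A *m v) 0 0.

(* n-qubit density matrix: PSD, unit trace, on (C^2)^{\otimes n} = C^(2^n) *)
Definition density_matrix (R : realType) (n : nat) (A : 'M[R[i]]_(2 ^ n))
  : Prop := psd A /\ \tr A = 1.

Definition is_spec_norm (R : realType) (d : nat) (A : 'M[R[i]]_d) (r : R)
  : Prop :=
  (exists a, eigenvalue A a /\ `|a| = r%:C) /\
  (forall a, eigenvalue A a -> `|a| <= r%:C).

(* Main.v *)
Require Import Defs.
From HB Require Import structures.
From mathcomp Require Import all_boot all_order all_algebra.
From mathcomp Require Import complex.
From mathcomp Require Import reals.
From mathcomp Require Import spectral sesquilinear zify ring lra.
Set Implicit Arguments. Unset Strict Implicit. Unset Printing Implicit Defensive.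
Import Order.TTheory GRing.Theory Num.Theory.
Local Open Scope ring_scope.

Section Gen.
Variable C : numClosedFieldType.

Definition adj m n (A : 'M[C]_(m, n)) : 'M[C]_(n, m) := (map_mx Num.conj A)^T.
Definition herm d (A : 'M[C]_d) := adj A = A.

Lemma adjE m n (A : 'M[C]_(m, n)) i j : adj A i j = (A j i)^*.
Proof. by rewrite !mxE. Qed.

Lemma adjK m n (A : 'M[C]_(m, n)) : adj (adj A) = A.
Proof. by apply/matrixP=> i j; rewrite !adjE conjCK. Qed.

Lemma adjM m n p (A : 'M[C]_(m, n)) (B : 'M[C]_(n, p)) :
  adj (A *m B) = adj B *m adj A.
Proof. by rewrite /adj map_mxM trmx_mul. Qed.

Lemma adjD m n (A B : 'M[C]_(m, n)) : adj (A + B) = adj A + adj B.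
Proof. by apply/matrixP=> i j; rewrite !mxE rmorphD. Qed.

Lemma adjZ m n a (A : 'M[C]_(m, n)) : adj (a *: A) = a^* *: adj A.
Proof. by apply/matrixP=> i j; rewrite !mxE rmorphM. Qed.

Lemma adj_scalar d a : adj (a%:M : 'M[C]_d) = (a^*)%:M.
Proof. by apply/matrixP=> i j; rewrite !mxE eq_sym rmorphMn. Qed.

Lemma adj_sum d I (r : seq I) (P : pred I) (F : I -> 'M[C]_d) :
  adj (\sum_(i <- r | P i) F i) = \sum_(i <- r | P i) adj (F i).
Proof.
elim/big_rec2: _ => [|i x y _ <-]; last by rewrite adjD.
by apply/matrixP=> i j; rewrite !mxE conjC0.
Qed.

Lemma tr_adj d (A : 'M[C]_d) : \tr (adj A) = (\tr A)^*.
Proof. by rewrite /adj mxtrace_tr /mxtrace rmorph_sum; apply: eq_bigr=> i _; rewrite mxE. Qed.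

Lemma herm_tr_real d (A : 'M[C]_d) : herm A -> \tr A \is Num.real.
Proof. by move=> hA; rewrite CrealE -tr_adj hA. Qed.

Lemma hermD d (A B : 'M[C]_d) : herm A -> herm B -> herm (A + B).
Proof. by rewrite /herm adjD => -> ->. Qed.

Lemma hermZ d a (A : 'M[C]_d) : a \is Num.real -> herm A -> herm (a *: A).
Proof. by rewrite /herm adjZ CrealE => /eqP -> ->. Qed.

Lemma herm_scalar d a : a \is Num.real -> herm (a%:M : 'M[C]_d).
Proof. by rewrite /herm adj_scalar CrealE => /eqP ->. Qed.

Lemma herm_sum d I (r : seq I) (P : pred I) (F : I -> 'M[C]_d) :
  (forall i, P i -> herm (F i)) -> herm (\sum_(i <- r | P i) F i).
Proof.
move=> h; rewrite /herm adj_sum; apply: eq_bigr => i Pi; exact: h.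
Qed.

Lemma hermX d (A : 'M[C]_d) m : herm A -> herm (A ^+ m).
Proof.
move=> hA; elim: m => [|m IH].
  by rewrite expr0; apply: herm_scalar; rewrite real1.
rewrite exprS /herm (adjM A (A ^+ m)) IH hA mulmxE; by rewrite -exprSr exprS.
Qed.

Lemma herm_mul_adj d (A B : 'M[C]_d) : herm A -> herm B -> herm (A *m B *m A).
Proof. by move=> hA hB; rewrite /herm !adjM hA hB mulmxA. Qed.

End Gen.

Section Gen2.
Variable C : numClosedFieldType.
Variable d : nat.
Implicit Types (A B P rho H : 'M[C]_d).

Definition psdg (rho : 'M[C]_d) :=
  herm rho /\ forall v : 'cV[C]_d, 0 <= (adj v *m rho *m v) 0 0.

Lemma adj_tstar m n (A : 'M[C]_(m, n)) : (A ^t Num.conj)%sesqui = adj A.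
Proof. by apply/matrixP=> i j; rewrite !mxE. Qed.

Lemma psd_diag rho (B : 'M[C]_d) j : psdg rho -> 0 <= (adj B *m rho *m B) j j.
Proof.
move=> [_ hp]; have := hp (col j B).
have -> : adj (col j B) = row j (adj B) by apply/matrixP=> a b; rewrite !mxE.
by rewrite -!row_mul colE mulmxA -colE !mxE.
Qed.

Lemma diag_adjB_ge0 (B : 'M[C]_d) j : 0 <= (adj B *m B) j j.
Proof.
rewrite !mxE; apply: sumr_ge0 => a _; rewrite adjE mulrC -normCK.
exact: exprn_ge0.
Qed.

Lemma unitary_adj (P : 'M[C]_d) : P *m adj P = 1%:M -> adj P *m P = 1%:M.
Proof. exact: mulmx1C. Qed.

Lemma herm_spectral (A : 'M[C]_d) : herm A ->
  exists P : 'M[C]_d, exists D : 'rV[C]_d,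
    P *m adj P = 1%:M /\ A = adj P *m diag_mx D *m P.
Proof.
move=> hA; have nA : A \is normalmx.
  by apply/normalmxP; rewrite adj_tstar hA.
have := orthomx_spectralP nA => eA.
exists (spectralmx A), (spectral_diag A).
have U := spectral_unitarymx A.
have U' : spectralmx A *m adj (spectralmx A) = 1%:M.
  by move/unitarymxP: U; rewrite adj_tstar.
split=> //; rewrite {1}eA invmx_unitary // adj_tstar //.
Qed.

Lemma spectral_eigen (A P : 'M[C]_d) (D : 'rV[C]_d) j :
  P *m adj P = 1%:M -> A = adj P *m diag_mx D *m P -> eigenvalue A (D 0 j).
Proof.
move=> U eA; apply/eigenvalueP; exists (row j P).
  rewrite eA !mulmxA -row_mul U; set e := row j (1%:M : 'M[C]_d).
  have -> : e *m diag_mx D = D 0 j *: e.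
    apply/matrixP=> a b; rewrite mul_mx_diag !mxE.
    by case: (eqVneq j b) => [->|ne]; rewrite ?mulr1n ?mulr0n ?mul0r ?mulr0 ?mul1r ?mulr1.
  by rewrite -scalemxAl /e -row_mul mul1mx.
apply/negP => /eqP h0.
have : row j P *m adj P = row j (1%:M : 'M[C]_d) by rewrite -row_mul U.
rewrite h0 mul0mx => /matrixP /(_ 0 j); rewrite !mxE eqxx /=.
by move/eqP; rewrite eq_sym oner_eq0.
Qed.

Lemma tr_diag_mul (D : 'rV[C]_d) (G : 'M[C]_d) :
  \tr (diag_mx D *m G) = \sum_j D 0 j * G j j.
Proof. by apply: eq_bigr => j _; rewrite mul_diag_mx mxE. Qed.

Lemma conj_diag rho P j : psdg rho -> 0 <= (P *m rho *m adj P) j j.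
Proof. by move=> h; have := psd_diag (adj P) j h; rewrite adjK. Qed.

Lemma conj_diag_sum rho P : \tr rho = 1 -> P *m adj P = 1%:M ->
  \sum_j (P *m rho *m adj P) j j = 1.
Proof.
move=> t1 U; rewrite -/(mxtrace _) mxtrace_mulC mulmxA.
by rewrite (unitary_adj U) mul1mx.
Qed.

Lemma conj_diag_le1 rho P j : psdg rho -> \tr rho = 1 -> P *m adj P = 1%:M ->
  (P *m rho *m adj P) j j <= 1.
Proof.
move=> h t1 U; rewrite -(conj_diag_sum t1 U) (bigD1 j) //= lerDl.
by apply: sumr_ge0 => i _; exact: conj_diag.
Qed.

Lemma rho_le_I rho H : psdg rho -> \tr rho = 1 -> herm H ->
  \tr (rho *m (H *m H)) <= \tr (H *m H).
Proof.
move=> hr t1 hH; have [P [D [U eR]]] := herm_spectral hr.1.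
have eD : P *m rho *m adj P = diag_mx D.
  by rewrite eR !mulmxA U mul1mx -!mulmxA U mulmx1.
set G := P *m (H *m H) *m adj P.
have eT : \tr (rho *m (H *m H)) = \tr (diag_mx D *m G).
  by rewrite eR /G -!mulmxA mxtrace_mulC !mulmxA.
have eT2 : \tr (H *m H) = \tr G.
  by rewrite /G [RHS]mxtrace_mulC !mulmxA (unitary_adj U) mul1mx.
have G0 : forall j, 0 <= G j j.
  move=> j; have -> : G = adj (H *m adj P) *m (H *m adj P).
    by rewrite /G adjM adjK hH !mulmxA.
  exact: diag_adjB_ge0.
rewrite eT eT2 tr_diag_mul; apply: ler_sum => j _.
have Dj : D 0 j = (P *m rho *m adj P) j j by rewrite eD mxE eqxx mulr1n.
rewrite -[leRHS]mul1r; apply: ler_wpM2r => //.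
by rewrite Dj; apply: conj_diag_le1.
Qed.

Lemma tr_rho_O_bound rho (O P : 'M[C]_d) (D : 'rV[C]_d) (L : C) :
  psdg rho -> \tr rho = 1 -> P *m adj P = 1%:M -> O = adj P *m diag_mx D *m P ->
  (forall j, `|D 0 j| <= L) -> `|\tr (rho *m O)| <= L.
Proof.
move=> hr t1 U eO hD.
have -> : \tr (rho *m O) = \tr (diag_mx D *m (P *m rho *m adj P)).
  by rewrite eO mxtrace_mulC -!mulmxA mxtrace_mulC !mulmxA.
rewrite tr_diag_mul; apply: le_trans (ler_norm_sum _ _ _) _.
apply: le_trans (_ : \sum_j L * (P *m rho *m adj P) j j <= L).
  apply: ler_sum => j _; rewrite normrM (ger0_norm (conj_diag _ _ hr)).
  by apply: ler_wpM2r => //; exact: conj_diag.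
by rewrite -mulr_sumr conj_diag_sum // mulr1.
Qed.

End Gen2.

Section Gen3.
Variable C : numClosedFieldType.
Variable d : nat.
Implicit Types (X Y rho : 'M[C]_d).

Lemma val_real rho X : herm rho -> herm X -> \tr (rho *m X) \is Num.real.
Proof.
move=> hr hX; rewrite CrealE -tr_adj adjM hX hr.
by rewrite mxtrace_mulC.
Qed.

Lemma val_sq_ge0 rho Y : psdg rho -> herm Y -> 0 <= \tr (rho *m (Y *m Y)).
Proof.
move=> hr hY; rewrite mulmxA mxtrace_mulC mulmxA.
rewrite -{1}hY /mxtrace; apply: sumr_ge0 => j _; exact: psd_diag.
Qed.

Lemma jensen rho X : psdg rho -> \tr rho = 1 -> herm X ->
  (\tr (rho *m X)) ^+ 2 <= \tr (rho *m (X *m X)).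
Proof.
move=> hr t1 hX; set t := \tr (rho *m X).
have rt : t \is Num.real by apply: val_real => //; exact: hr.1.
have hY : herm (X - t%:M) by apply: hermD => //; rewrite -scaleN1r; apply: hermZ;
  rewrite ?realN ?real1 //; exact: herm_scalar.
have := val_sq_ge0 hr hY.
have -> : (X - t%:M) *m (X - t%:M) = X *m X + (- (t + t)) *: X + (t * t)%:M.
  rewrite mulmxBl !mulmxBr mul_mx_scalar mul_scalar_mx scalar_mxM.
  by rewrite opprB addrA addrAC scaleNr scalerDl opprD addrA.
rewrite !mulmxDr !mxtraceD -scalemxAr mxtraceZ -/t.
rewrite mul_mx_scalar mxtraceZ t1 mulr1.
set u := \tr _; move=> h; rewrite expr2.
have E : u + - (t + t) * t + t * t = u - t * t by ring.
by move: h; rewrite E subr_ge0.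
Qed.

Lemma jensen_iter rho X j : psdg rho -> \tr rho = 1 -> herm X ->
  `|\tr (rho *m X)| ^+ (2 ^ j.+1) <= \tr (rho *m X ^+ (2 ^ j.+1)).
Proof.
move=> hr t1 hX; elim: j => [|j IH].
  rewrite expn1 real_normK ?expr2; last by apply: val_real => //; exact: hr.1.
  by rewrite -expr2 (jensen hr t1 hX).
have hY : herm (X ^+ (2 ^ j.+1)) by exact: hermX.
have e : X ^+ (2 ^ j.+2) = X ^+ (2 ^ j.+1) *m X ^+ (2 ^ j.+1).
  by rewrite mulmxE -exprD expnS mul2n addnn.
rewrite e; apply: le_trans (jensen hr t1 hY).
have -> : `|\tr (rho *m X)| ^+ (2 ^ j.+2) = (`|\tr (rho *m X)| ^+ (2 ^ j.+1)) ^+ 2.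
  by rewrite -exprM expnS mulnC.
rewrite ler_pXn2r // ?nnegrE ?exprn_ge0 //.
by apply: le_trans IH; rewrite exprn_ge0.
Qed.

End Gen3.

Lemma expand_pow (T : pzRingType) k m (x : 'I_k -> T) :
  (\sum_i x i) ^+ m = \sum_(s : {ffun 'I_m -> 'I_k}) \prod_(j < m) x (s j).
Proof.
have -> : (\sum_i x i) ^+ m = \prod_(j < m) \sum_i x i.
  by rewrite prodr_const card_ord.
exact: bigA_distr_bigA.
Qed.

Section Gen4.
Variable C : numClosedFieldType.
Variable d : nat.
Implicit Types (X Y : 'M[C]_d).

Lemma prod_scale m (c : 'I_m -> C) (B : 'I_m -> 'M[C]_d) :
  \prod_(j < m) (c j *: B j) = (\prod_(j < m) c j) *: \prod_(j < m) B j.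
Proof.
elim: m c B => [|m IH] c B; first by rewrite !big_ord0 scale1r.
rewrite !big_ord_recr /= IH -!mulmxE -scalemxAl -scalemxAr scalerA.
done.
Qed.

Definition eps (b : bool) : C := if b then 1 else -1.

Lemma w_ge0 k m (s : {ffun 'I_m -> 'I_k}) :
  0 <= \sum_(y : {ffun 'I_k -> bool}) \prod_(j < m) eps (y (s j)).
Proof.
have e : forall y : {ffun 'I_k -> bool}, \prod_(j < m) eps (y (s j)) =
    \prod_(i < k) eps (y i) ^+ #|[pred j | s j == i]|.
  move=> y; rewrite (partition_big s predT) //=; apply: eq_bigr => i _.
  rewrite (eq_bigr (fun _ => eps (y i))); last by move=> j /eqP ->.
  by rewrite prodr_const.
rewrite (eq_bigr _ (fun y _ => e y)).
rewrite -(bigA_distr_bigA (fun i b => eps b ^+ #|[pred j | s j == i]|)).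
apply: prodr_ge0 => i _; rewrite big_bool /= expr1n -signr_odd.
by case: (odd _); rewrite ?expr1 ?expr0 ?subrr // addr_ge0 // ler01.
Qed.

Definition bnd X (c : C) := forall v : 'cV[C]_d,
  (adj (X *m v) *m (X *m v)) 0 0 <= c ^+ 2 * (adj v *m v) 0 0.

Lemma normsq (z : 'cV[C]_d) : (adj z *m z) 0 0 = \sum_a `|z a 0| ^+ 2.
Proof. by rewrite mxE; apply: eq_bigr => a _; rewrite adjE mulrC normCK. Qed.

Lemma normsq_ge0 (z : 'cV[C]_d) : 0 <= (adj z *m z) 0 0.
Proof. by rewrite normsq; apply: sumr_ge0 => a _; exact: exprn_ge0. Qed.

Lemma bnd1 : bnd 1%:M 1.
Proof. by move=> v; rewrite mul1mx expr1n mul1r. Qed.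

Lemma bndM X Y a b : 0 <= a -> bnd X a -> bnd Y b -> bnd (X *m Y) (a * b).
Proof.
move=> a0 hX hY v; rewrite -mulmxA; apply: le_trans (hX _) _.
by rewrite exprMn -[in leRHS]mulrA; apply: (ler_wpM2l (exprn_ge0 2 a0) (hY v)).
Qed.

Lemma bnd_prod m (B : 'I_m -> 'M[C]_d) c : 0 <= c -> (forall j, bnd (B j) c) ->
  bnd (\prod_(j < m) B j) (c ^+ m).
Proof.
move=> c0 hB; elim: m B hB => [|m IH] B hB; first by rewrite big_ord0 expr0; exact: bnd1.
rewrite big_ord_recr /= exprSr -mulmxE; apply: bndM.
- exact: exprn_ge0.
- by apply: IH => j; exact: hB.
- exact: hB.
Qed.

Lemma bnd_tr X c : 0 <= c -> bnd X c -> `|\tr X| <= d%:R * c.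
Proof.
move=> c0 hX; rewrite /mxtrace; apply: le_trans (ler_norm_sum _ _ _) _.
have -> : d%:R * c = \sum_(j < d) c by rewrite sumr_const card_ord mulr_natl.
apply: ler_sum => j _.
pose e : 'cV[C]_d := delta_mx j 0.
have := hX e.
have -> : (adj e *m e) 0 0 = 1.
  rewrite normsq (bigD1 j) //= big1 ?addr0 ?mxE ?eqxx ?normr1 ?expr1n //.
  by move=> a /negPf na; rewrite mxE na normr0 expr0n.
rewrite mulr1 normsq => h.
have h2 : `|X j j| ^+ 2 <= c ^+ 2.
  apply: le_trans h.
  have Xe : forall a, (X *m e) a 0 = X a j by move=> a; rewrite /e -colE mxE.
  rewrite (bigD1 j) //= Xe lerDl; apply: sumr_ge0 => a _; exact: exprn_ge0.
by rewrite -(@ler_pXn2r _ 2) ?nnegrE.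
Qed.

Lemma bnd_spec (H P : 'M[C]_d) (D : 'rV[C]_d) c : 0 <= c ->
  P *m adj P = 1%:M -> H = adj P *m diag_mx D *m P ->
  (forall j, `|D 0 j| <= c) -> bnd H c.
Proof.
move=> c0 U eH hD v; set w := P *m v.
have -> : H *m v = adj P *m (diag_mx D *m w) by rewrite eH !mulmxA.
rewrite adjM adjK -mulmxA [P *m _]mulmxA U mul1mx.
have -> : adj v *m v = adj w *m w.
  by rewrite /w adjM -mulmxA [adj P *m _]mulmxA (unitary_adj U) mul1mx.
rewrite !normsq mulr_sumr; apply: ler_sum => a _.
rewrite mul_diag_mx mxE normrM exprMn; apply: ler_wpM2r; first exact: exprn_ge0.
by rewrite (@ler_pXn2r _ 2) ?nnegrE.
Qed.

End Gen4.

Section Gen5.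
Variable C : numClosedFieldType.
Variable d : nat.

Lemma moment_bound k m (A : 'I_k -> 'M[C]_d) (c : C) : 0 <= c ->
  (forall i, bnd (A i) c) ->
  `|\sum_(y : {ffun 'I_k -> bool}) \tr ((\sum_i eps C (y i) *: A i) ^+ m)|
    <= d%:R * c ^+ m * \sum_(y : {ffun 'I_k -> bool}) (\sum_i eps C (y i)) ^+ m.
Proof.
move=> c0 hA.
have e1 : forall y : {ffun 'I_k -> bool},
  \tr ((\sum_i eps C (y i) *: A i) ^+ m) =
  \sum_(s : {ffun 'I_m -> 'I_k}) (\prod_(j < m) eps C (y (s j))) * \tr (\prod_(j < m) A (s j)).
  move=> y; rewrite expand_pow (big_morph _ (@mxtraceD _ _) (mxtrace0 _ _)).
  by apply: eq_bigr => s _; rewrite prod_scale mxtraceZ.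
rewrite (eq_bigr _ (fun y _ => e1 y)) exchange_big /=.
have e2 : \sum_(y : {ffun 'I_k -> bool}) (\sum_i eps C (y i)) ^+ m =
   \sum_(s : {ffun 'I_m -> 'I_k}) \sum_(y : {ffun 'I_k -> bool}) \prod_(j < m) eps C (y (s j)).
  by rewrite exchange_big /=; apply: eq_bigr => y _; rewrite expand_pow.
rewrite e2 mulr_sumr; apply: le_trans (ler_norm_sum _ _ _) _.
apply: ler_sum => s _; rewrite -mulr_suml normrM (ger0_norm (w_ge0 _ _)) mulrC.
apply: ler_wpM2r; first exact: w_ge0.
by apply: bnd_tr; [exact: exprn_ge0 | apply: bnd_prod].
Qed.

End Gen5.

Lemma bin_even_le j l : ('C(j.*2, l.*2) <= 'C(j, l) * (j.*2) ^ l)%N.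
Proof.
elim: l => [|l IH]; first by rewrite !bin0 expn0.
have e1 : ((l.*2.+1) * (l.*2.+2) * 'C(j.*2, (l.+1).*2) =
          (j.*2 - l.*2.+1) * (j.*2 - l.*2) * 'C(j.*2, l.*2))%N.
  rewrite doubleS -mulnA mul_bin_left mulnCA mul_bin_left mulnA; ring.
have e2 : (l.+1 * 'C(j, l.+1) = (j - l) * 'C(j, l))%N by rewrite mul_bin_left.
have pos : (0 < l.*2.+1 * l.*2.+2)%N by [].
rewrite -(leq_pmul2l pos) e1.
apply: leq_trans (_ : ((j.*2 - l.*2.+1) * (j.*2 - l.*2) * ('C(j, l) * j.*2 ^ l)) <= _)%N.
  by rewrite leq_mul2l IH orbT.
have e3 : (l.*2.+1 * l.*2.+2 * ('C(j, l.+1) * j.*2 ^ l.+1) =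
           l.*2.+1 * 2 * (l.+1 * 'C(j, l.+1)) * j.*2 * j.*2 ^ l)%N.
  by rewrite expnS -!addnn; ring.
rewrite e3 e2.
have e4 : (l.*2.+1 * 2 * ((j - l) * 'C(j, l)) * j.*2 * j.*2 ^ l =
   (l.*2.+1 * 2 * (j - l) * j.*2) * ('C(j, l) * j.*2 ^ l))%N by ring.
rewrite e4 leq_mul2r; apply/orP; right.
case: (leqP j l) => hjl.
  have -> : (j - l = 0)%N by lia.
  have -> : (j.*2 - l.*2 = 0)%N by lia.
  by rewrite !muln0.
have -> : (j.*2 - l.*2 = 2 * (j - l))%N by lia.
nia.
Qed.

Definition ext (T : Type) k (b : T) (z : {ffun 'I_k -> T}) : {ffun 'I_k.+1 -> T} :=
  [ffun i => if unlift ord0 i is Some j then z j else b].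

Lemma sum_ffunS (T : finType) (V : nmodType) k (F : {ffun 'I_k.+1 -> T} -> V) :
  \sum_y F y = \sum_(b : T) \sum_(z : {ffun 'I_k -> T}) F (ext b z).
Proof.
rewrite pair_big /=.
rewrite (reindex (fun p : T * {ffun 'I_k -> T} => ext p.1 p.2)) //=.
exists (fun y : {ffun 'I_k.+1 -> T} => (y ord0, [ffun j => y (lift ord0 j)])).
  move=> [b z] _ /=; congr (_, _); first by rewrite ffunE unlift_none.
  by apply/ffunP => j; rewrite !ffunE liftK.
move=> y _ /=; apply/ffunP => i; rewrite !ffunE.
by case: unliftP => [j ->|->]; rewrite ?ffunE.
Qed.

Section Mom.
Variable C : numClosedFieldType.

Definition mom k m : C := \sum_(y : {ffun 'I_k -> bool}) (\sum_i eps C (y i)) ^+ m.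

Lemma momS k m : mom k.+1 m =
  \sum_(l < m.+1) (1 + (-1) ^+ l) * mom k (m - l) *+ 'C(m, l).
Proof.
rewrite /mom sum_ffunS big_bool /=.
have e : forall b (z : {ffun 'I_k -> bool}),
  \sum_(i < k.+1) eps C (ext b z i) = \sum_i eps C (z i) + eps C b.
  move=> b z; rewrite big_ord_recl addrC ffunE unlift_none; congr (_ + _).
  by apply: eq_bigr => i _; rewrite ffunE liftK.
rewrite (eq_bigr _ (fun z _ => congr1 (fun x => x ^+ m) (e true z))).
rewrite (eq_bigr _ (fun z _ => congr1 (fun x => x ^+ m) (e false z))).
rewrite -big_split /=.
have e2 : forall z : {ffun 'I_k -> bool},
  (\sum_i eps C (z i) + eps C true) ^+ m + (\sum_i eps C (z i) + eps C false) ^+ m =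
  \sum_(l < m.+1) (1 + (-1) ^+ l) * ((\sum_i eps C (z i)) ^+ (m - l)) *+ 'C(m, l).
  move=> z; rewrite !exprDn -big_split /=; apply: eq_bigr => l _.
  rewrite -mulrnDl; congr (_ *+ _); rewrite /eps expr1n mulr1 mulrDl mul1r.
  by rewrite mulrC.
rewrite (eq_bigr _ (fun z _ => e2 z)) exchange_big /=; apply: eq_bigr => l _.
by rewrite mulr_sumr sumrMnl.
Qed.

End Mom.

Lemma sum_even_odd (V : nmodType) j (f : nat -> V) :
  \sum_(l < (j.*2).+1) f l = \sum_(l < j.+1) f (l.*2) + \sum_(l < j) f (l.*2.+1).
Proof.
elim: j => [|j IH]; first by rewrite !big_ord_recr !big_ord0 /= !add0r addr0.
rewrite doubleS (big_ord_recr j.*2.+2) (big_ord_recr j.*2.+1) /= IH.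
rewrite (big_ord_recr j.+1) (big_ord_recr j) /= doubleS.
rewrite -!addrA; congr (_ + _).
rewrite [in RHS](big_ord_recr j) /=; congr (_ + _).
by rewrite [LHS]addrA [LHS]addrC.
Qed.

Section Mom2.
Variable C : numClosedFieldType.

Lemma mom_even k j : mom C k.+1 (j.*2) =
  \sum_(l < j.+1) 2%:R * mom C k ((j - l).*2) *+ 'C(j.*2, l.*2).
Proof.
rewrite momS (@sum_even_odd _ j (fun l => (1 + (-1) ^+ l) * mom C k (j.*2 - l) *+ 'C(j.*2, l))).
rewrite [X in _ + X]big1 ?addr0; last first.
  by move=> l _; rewrite -signr_odd /= odd_double /= expr1 subrr mul0r mul0rn.
apply: eq_bigr => l _; rewrite -signr_odd odd_double expr0 doubleB.
done.
Qed.

Lemma mom0 m : mom C 0 m = 0 ^+ m.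
Proof.
rewrite /mom (eq_bigr (fun _ => 0 ^+ m)); last by move=> y _; rewrite big_ord0.
by rewrite sumr_const card_ffun card_ord expn0 mulr1n.
Qed.

Lemma mom_bound q k j : (j <= q)%N ->
  mom C k (j.*2) <= (2 ^ k * (q.*2 * k) ^ j)%N%:R.
Proof.
elim: k j => [|k IH] j hj.
  rewrite mom0 muln0; case: j hj => [|j] _; first by rewrite expr0 expn0.
  by rewrite expr0n /= exp0n.
rewrite mom_even.
apply: le_trans (_ : \sum_(l < j.+1) (2 * (2 ^ k * (q.*2 * k) ^ (j - l)) * 'C(j.*2, l.*2))%N%:R <= _).
  apply: ler_sum => l _; rewrite !natrM mulrnAl -mulr_natr; apply: ler_wpM2r => //.
  rewrite mul1r -mulr_natl; apply: ler_wpM2l => //; rewrite -natrM; apply: IH; lia.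
rewrite -natr_sum ler_nat.
apply: leq_trans (_ : \sum_(l < j.+1) (2 ^ k.+1 * ('C(j, l) * ((q.*2 * k) ^ (j - l) * q.*2 ^ l))) <= _)%N.
  apply: leq_sum => l _.
  have h1 := bin_even_le j l.
  have h2 : (j.*2 ^ l <= q.*2 ^ l)%N.
    by case: (nat_of_ord l) => [|e] //; rewrite leq_exp2r //; lia.
  have h3 : ('C(j.*2, l.*2) <= 'C(j, l) * q.*2 ^ l)%N.
    by apply: leq_trans h1 _; rewrite leq_mul2l h2 orbT.
  set Z := ((q.*2 * k) ^ (j - l))%N.
  have -> : (2 * (2 ^ k * Z) * 'C(j.*2, l.*2) = (2 * 2 ^ k * Z) * 'C(j.*2, l.*2))%N by ring.
  have -> : (2 ^ k.+1 * ('C(j, l) * (Z * q.*2 ^ l)) = (2 * 2 ^ k * Z) * ('C(j, l) * q.*2 ^ l))%N.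
    by rewrite expnS; ring.
  by rewrite leq_mul2l h3 orbT.
rewrite -big_distrr /= -expnDn leq_mul2l; apply/orP; right.
by rewrite mulnS addnC.
Qed.

End Mom2.

Local Open Scope complex_scope.

Lemma normC_R (R : realType) (x : R) : `|x%:C| = `|x|%:C.
Proof. by rewrite normc_def /= expr0n addr0 sqrtr_sqr. Qed.

Lemma Re_le (R : realType) (z : R[i]) (x : R) : z <= x%:C -> complex.Re z <= x.
Proof. by rewrite lecE => /andP[_]. Qed.

Lemma le_Re (R : realType) (z : R[i]) (x : R) : x%:C <= z -> x <= complex.Re z.
Proof. by rewrite lecE => /andP[_]. Qed.

Lemma Re_norm (R : realType) (z : R[i]) (L : R) : `|z| <= L%:C -> `|complex.Re z| <= L.
Proof. by move=> h; rewrite -lecR; apply: le_trans h; apply: normc_ge_Re. Qed.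

Lemma key (R : realType) (k n : nat) (hn : (0 < n)%N) (hk : (n < k)%N)
  (rho : {ffun 'I_k -> bool} -> 'M[R[i]]_(2 ^ n))
  (hrho : forall y, density_matrix (rho y))
  (O : 'I_k -> 'M[R[i]]_(2 ^ n)) (alpha : 'I_k -> R) (gamma : R)
  (hO : forall i, is_hermitian (O i)) (hg : 0 < gamma)
  (h0 : forall (y : {ffun 'I_k -> bool}) (i : 'I_k), y i = false ->
     \tr (rho y *m O i) <= (alpha i - gamma)%:C)
  (h1 : forall (y : {ffun 'I_k -> bool}) (i : 'I_k), y i = true ->
     (alpha i + gamma)%:C <= \tr (rho y *m O i))
  (N : 'I_k -> R) (hN : forall i, is_spec_norm (O i) (N i)) :
  k%:R * gamma ^+ 2 <= 32%:R * n%:R * (\big[Num.max/0]_(i < k) N i) ^+ 2.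
Proof.
set L := \big[Num.max/0]_(i < k) N i.
set d := (2 ^ n)%N.
have hNL : forall i, N i <= L by move=> i; rewrite /L (bigD1 i) //= le_max lexx.
have hr : forall y, psdg (rho y) := fun y => (hrho y).1.
have ht : forall y, \tr (rho y) = 1 := fun y => (hrho y).2.
have spec : forall i, exists P : 'M[R[i]]_d, exists D : 'rV_d,
    P *m adj P = 1%:M /\ O i = adj P *m diag_mx D *m P /\ forall j, `|D 0 j| <= L%:C.
  move=> i; have [P [D [U eO]]] := herm_spectral (hO i); exists P, D; do 2 split => //.
  move=> j; have [_ hb] := hN i; apply: le_trans (hb _ (spectral_eigen j U eO)) _.
  by rewrite lecR.
have trb : forall y i, `|complex.Re (\tr (rho y *m O i))| <= L.
  move=> y i; have [P [D [U [eO hD]]]] := spec i; apply: Re_norm.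
  exact: tr_rho_O_bound (hr y) (ht y) U eO hD.
have ha : forall i, `|alpha i| <= L - gamma.
  move=> i; have := trb [ffun => true] i; have := trb [ffun => false] i.
  have u := le_Re (h1 [ffun => true] i (ffunE _ _)).
  have v := Re_le (h0 [ffun => false] i (ffunE _ _)).
  move=> /ler_normlP [a1 a2] /ler_normlP [b1 b2]; apply/ler_normlP; split; lra.
pose A i := O i - ((alpha i)%:C)%:M.
have hA : forall i, herm (A i).
  move=> i; apply: hermD; first exact: hO.
  rewrite -scaleN1r; apply: hermZ; first by rewrite realN real1.
  by apply: herm_scalar; apply/complex_realP; exists (alpha i).
have k0 : (0 < k)%N by apply: leq_ltn_trans hk.
pose i0 : 'I_k := Ordinal k0.
have Lg : gamma <= L.
  by have := le_trans (normr_ge0 _) (ha i0); rewrite subr_ge0.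
have L0 : 0 <= L by apply: le_trans Lg; exact: ltW.
have bA : forall i, bnd (A i) (L + L)%:C.
  move=> i; have [P [D [U [eO hD]]]] := spec i.
  apply: (@bnd_spec _ _ _ P (D - const_mx (alpha i)%:C)) => //.
  - by rewrite lecR addr_ge0.
  - have -> : diag_mx (D - const_mx (alpha i)%:C) = diag_mx D - ((alpha i)%:C)%:M.
      by apply/matrixP => a b; rewrite !mxE; case: (a == b); rewrite ?mulr1n ?mulr0n ?subr0.
    rewrite mulmxBr mulmxBl -eO mul_mx_scalar -scalemxAl (unitary_adj U) /A.
    by rewrite scalemx1.
  - move=> j; rewrite !mxE; apply: le_trans (ler_normB _ _) _.
    rewrite rmorphD /=; apply: lerD; first exact: hD.
    by rewrite normC_R lecR; apply: le_trans (ha i) _; rewrite lerBlDr lerDl ltW.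
pose M (y : {ffun 'I_k -> bool}) := \sum_i eps R[i] (y i) *: A i.
have epsR : forall b, eps R[i] b \is Num.real by case; rewrite /eps ?realN real1.
have hM : forall y, herm (M y).
  by move=> y; apply: herm_sum => i _; apply: hermZ.
have valM : forall y, (k%:R * gamma)%:C <= \tr (rho y *m M y).
  move=> y; rewrite /M mulmx_sumr (big_morph _ (@mxtraceD _ _) (mxtrace0 _ _)).
  have -> : (k%:R * gamma)%:C = \sum_(i < k) gamma%:C.
    by rewrite sumr_const card_ord -rmorphMn /= mulr_natl.
  apply: ler_sum => i _; rewrite -scalemxAr mxtraceZ /A mulmxBr mxtraceD.
  rewrite -scaleN1r mxtraceZ mul_mx_scalar mxtraceZ ht mulr1 mulN1r.
  case hy : (y i); rewrite /eps ?mul1r ?mulN1r.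
    by rewrite lerBrDr addrC -rmorphD /=; apply: h1.
  rewrite opprD opprK addrC lerBrDr -lerBrDl -rmorphB /=; apply: h0.
  done.
pose J := up_log 2 n.
pose q := (2 ^ J)%N.
have qm : (2 ^ J.+1 = q.*2)%N by rewrite expnS mul2n.
have perY : forall y, ((k%:R * gamma)%:C) ^+ (q.*2) <= \tr (M y ^+ (q.*2)).
  move=> y; have v := valM y.
  have t0 : 0 <= (k%:R * gamma)%:C by rewrite lecR mulr_ge0 // ltW.
  have v0 : 0 <= \tr (rho y *m M y) := le_trans t0 v.
  apply: le_trans (_ : `|\tr (rho y *m M y)| ^+ (q.*2) <= _).
    by rewrite (ger0_norm v0) ler_pXn2r ?nnegrE // double_gt0 expn_gt0.
  rewrite -qm; apply: le_trans (jensen_iter J (hr y) (ht y) (hM y)) _.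
  rewrite qm -addnn exprD mulmxE.
  by apply: rho_le_I (hr y) (ht y) (hermX _ (hM y)).
have sumY : ((k%:R * gamma)%:C) ^+ (q.*2) *+ 2 ^ k <=
    d%:R * ((L + L)%:C) ^+ (q.*2) * (2 ^ k * (q.*2 * k) ^ q)%N%:R.
  have c0 : 0 <= ((k%:R * gamma)%:C) ^+ (q.*2) by rewrite exprn_ge0 // lecR mulr_ge0 // ltW.
  have e : \sum_(y : {ffun 'I_k -> bool}) ((k%:R * gamma)%:C) ^+ (q.*2)
      = ((k%:R * gamma)%:C) ^+ (q.*2) *+ 2 ^ k.
    by rewrite sumr_const card_ffun card_ord; congr (_ *+ (_ ^ _)); exact: card_bool.
  rewrite -e; apply: le_trans (ler_sum _ (fun y _ => perY y)) _.
  have s0 : 0 <= \sum_(y : {ffun 'I_k -> bool}) \tr (M y ^+ q.*2).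
    by apply: le_trans (ler_sum _ (fun y _ => perY y)); apply: sumr_ge0.
  apply: le_trans (real_ler_norm (ger0_real s0)) _.
  apply: le_trans (moment_bound (q.*2) (_ : 0 <= (L + L)%:C) bA) _.
    by rewrite lecR addr_ge0.
  apply: ler_wpM2l; first by rewrite mulr_ge0 ?exprn_ge0 // lecR addr_ge0.
  exact: (mom_bound _ _ (leqnn q)).
set G := k%:R * gamma.
set LL := L + L.
have sR : G ^+ (q.*2) * (2 ^ k)%:R <=
    (2 ^ n)%:R * LL ^+ (q.*2) * (2 ^ k * (q.*2 * k) ^ q)%:R.
  rewrite -lecR !rmorphM !rmorphXn /= !rmorph_nat mulr_natr.
  by move: sumY; rewrite natrM [((_ * _) ^ q)%:R]natrX.
have qpos : (0 < q)%N by rewrite expn_gt0.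
have nq : (n <= q)%N by apply: up_logP.
have q2n : (q <= n.*2)%N.
  case: (leqP n 1) => h.
    have J0 : J = 0%N by apply/eqP; rewrite /J up_log_eq0 h orbT.
    rewrite /q J0; lia.
  have hb := @up_log_bounds 2 n isT h; rewrite -/J in hb.
  have J0 : (0 < J)%N by rewrite /J up_log_gt0 h.
  case/andP: hb => hlt _; rewrite /q -(prednK J0) expnS; lia.
have G0 : 0 <= G by rewrite mulr_ge0 // ltW.
have sa : G ^+ (q.*2) <= (2 ^ q)%:R * LL ^+ (q.*2) * ((q.*2 * k)%:R) ^+ q.
  have p2 : (0 : R) < (2 ^ k)%:R by rewrite ltr0n expn_gt0.
  rewrite -(ler_pM2r p2); apply: le_trans sR _.
  rewrite natrM [((_ * _) ^ q)%:R]natrX.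
  set X := (q.*2 * k)%:R.
  have -> : (2 ^ q)%:R * LL ^+ q.*2 * X ^+ q * (2 ^ k)%:R =
            (2 ^ q)%:R * (LL ^+ q.*2 * ((2 ^ k)%:R * X ^+ q)) by ring.
  rewrite -mulrA ler_wpM2r ?ler_nat ?leq_exp2l //.
  have LL0 : 0 <= LL by rewrite /LL addr_ge0.
  by rewrite mulr_ge0 ?exprn_ge0 // mulr_ge0 ?exprn_ge0 ?ler0n.
have LL0 : 0 <= LL by rewrite /LL addr_ge0.
have g0 : 0 <= gamma := ltW hg.
have hsb : G ^+ 2 <= 2%:R * LL ^+ 2 * (q.*2 * k)%:R.
  rewrite -(@ler_pXn2r _ q qpos) ?nnegrE ?exprn_ge0 ?mulr_ge0 ?ler0n //.
  have e1 : (G ^+ 2) ^+ q = G ^+ q.*2 by rewrite -exprM mul2n.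
  have e2 : (2%:R * LL ^+ 2 * (q.*2 * k)%:R) ^+ q =
     (2 ^ q)%:R * LL ^+ q.*2 * (q.*2 * k)%:R ^+ q.
    by rewrite exprMn [(2%:R * _) ^+ q]exprMn -exprM mul2n natrX.
  by rewrite e1 e2; exact: sa.
have K0 : (0 : R) < k%:R by rewrite ltr0n.
have sc : k%:R * gamma ^+ 2 <= 16%:R * q%:R * L ^+ 2.
  rewrite -(ler_pM2l K0).
  have -> : k%:R * (k%:R * gamma ^+ 2) = G ^+ 2 by rewrite /G; ring.
  apply: le_trans hsb _; rewrite /LL -mul2n natrM !natrM; rewrite le_eqVlt; apply/orP; left; apply/eqP; ring.
apply: le_trans sc _.
have -> : (32%:R : R) = 16%:R * 2%:R by rewrite -natrM.
rewrite -!mulrA ler_wpM2l ?ler0n // !mulrA ler_wpM2r ?exprn_ge0 //.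
by rewrite ler_wpM2r // -natrM ler_nat; lia.
Qed.

Theorem mainTheorem1 :
  exists c : rat, 0 < c /\
  forall (R : realType) (k n : nat), (0 < n)%N -> (n < k)%N ->
  forall (rho : {ffun 'I_k -> bool} -> 'M[R[i]]_(2 ^ n)),
  (forall y, density_matrix (rho y)) ->
  forall (O : 'I_k -> 'M[R[i]]_(2 ^ n)) (alpha : 'I_k -> R) (gamma : R),
  (forall i, is_hermitian (O i)) ->
  0 < gamma ->
  (forall (y : {ffun 'I_k -> bool}) (i : 'I_k), y i = false ->
     \tr (rho y *m O i) <= (alpha i - gamma)%:C) ->
  (forall (y : {ffun 'I_k -> bool}) (i : 'I_k), y i = true ->
     (alpha i + gamma)%:C <= \tr (rho y *m O i)) ->
  forall (N : 'I_k -> R), (forall i, is_spec_norm (O i) (N i)) ->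
  let Onorm := \big[Num.max/0]_(i < k) N i in
  ratr c * k%:R <= n%:R * Onorm ^+ 2 / gamma ^+ 2.
Proof.
exists (32%:R)^-1; split; first by rewrite invr_gt0 ltr0n.
move=> R k n hn hk rho hrho O alpha gamma hO hg h0 h1 N hN.
have h := key hn hk hrho hO hg h0 h1 hN.
rewrite /is_true /=.
rewrite fmorphV /= ratr_nat.
have g2 : 0 < gamma ^+ 2 by rewrite exprn_gt0.
rewrite ler_pdivlMr // -mulrA.
move: h; rewrite -mulrA.
set a := k%:R * gamma ^+ 2; set b := n%:R * _.
move=> h; lra.
Qed.
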